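(* Let $H$ be a real Hilbert space and let $T:H\to H$ be a nonexpansive operator with $Fix(T)=\{x\in H:Tx=x\}\neq\varnothing$. Let $z^{0},z^{-1}\in H$, let $\{e^k\}_{k\ge0}$ be a sequence in $H$, let $\{\alpha_k\}_{k\ge0},\{\lambda_k\}_{k\ge0}$ be nondecreasing real sequences, and define for $k\ge0$ $$\mu^{k}=z^{k}+\alpha_{k}(z^{k}-z^{k-1}),\qquad z^{k+1}=\mu^{k}+\lambda_{k}(T\mu^{k}+e^{k}-\mu^{k}).$$ Assume: (a) there is $\alpha\in[0,1)$ with $0\le\alpha_k\le\alpha$ for all $k$, and $\alpha_0=0$; (b) there are $\lambda,\sigma,\delta>0$ such that $$\delta>\frac{\alpha[\alpha(1+\alpha)+\sigma]}{1-\alpha^2}\quad\text{and}\quad 0<\lambda\le\lambda_k\le\frac{\delta-\alpha[\alpha(1+\alpha)+\alpha\delta+\sigma]}{\delta[1+\alpha(1+\alpha)+\alpha\delta+\sigma]}\ \text{ for all }k;$$ (c) the sequence $\{z^k\}$ is bounded; (d) $\sum_{k=0}^{+\infty}\|e^k\|<+\infty$. Then: (i) $\sum_{k=0}^{\infty}\|z^{k+1}-z^k\|^2<+\infty$, and in particular $\lim_{k\to+\infty}\|z^{k+1}-z^k\|=0$; (ii) for every $z^*\in Fix(T)$, $\lim_{k\to+\infty}\|z^k-z^*\|$ exists; (iii) $\lim_{k\to+\infty}\|T\mu^k-\mu^k\|=0$ and $\{z^k\}$ converges weakly to a fixed point of $T$. *)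

(* Defs.v *)
From HB Require Import structures.
From mathcomp Require Import all_boot all_order all_algebra.
From mathcomp Require Import all_classical all_reals all_analysis.
Set Implicit Arguments. Unset Strict Implicit. Unset Printing Implicit Defensive.
Import Order.TTheory GRing.Theory Num.Theory.
Import numFieldNormedType.Exports.
Local Open Scope classical_set_scope.
Local Open Scope ring_scope.

(* A real Hilbert space is a complete normed space (over a realType R)
   whose norm is induced by an inner product [ip]: symmetric, linear in
   the first argument, and ip x x = |x|^2. *)
Definition is_inner_product {R : realType} {H : normedModType R}
  (ip : H -> H -> R) : Prop :=
  [/\ forall x y : H, ip x y = ip y x,
      forall (a : R) (x y w : H), ip (a *: x + y) w = a * ip x w + ip y w
    & forall x : H, ip x x = `|x| ^+ 2].

Definition nonexpansive {R : realType} {H : normedModType R} (T : H -> H) : Prop :=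
  forall x y : H, `|T x - T y| <= `|x - y|.

Definition fixed_point {R : realType} {H : normedModType R} (T : H -> H) (x : H) : Prop :=
  T x = x.

Definition weakly_converges {R : realType} {H : normedModType R}
  (ip : H -> H -> R) (u : nat -> H) (l : H) : Prop :=
  forall y : H, (fun k => ip (u k) y) @ \oo --> ip l y.

(* Main.v *)
Require Import Defs.
From HB Require Import structures.
From mathcomp Require Import all_boot all_order all_algebra.
From mathcomp Require Import all_classical all_reals all_analysis.
From mathcomp Require Import ring lra.
Set Implicit Arguments. Unset Strict Implicit. Unset Printing Implicit Defensive.
Import Order.TTheory GRing.Theory Num.Theory.
Import numFieldNormedType.Exports.
Local Open Scope classical_set_scope.
Local Open Scope ring_scope.

Section IP.
Variables (R : realType) (H : normedModType R) (ip : H -> H -> R).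
Hypothesis hip : is_inner_product ip.

Lemma ipC x y : ip x y = ip y x.
Proof. by case: hip. Qed.
Lemma ipDl x y w : ip (x + y) w = ip x w + ip y w.
Proof. case: hip => _ h _. have := h 1 x y w. rewrite scale1r mul1r. done. Qed.
Lemma ipZl a x w : ip (a *: x) w = a * ip x w.
Proof.
case: hip => _ h _. have := h a x 0 w. rewrite addr0 => ->.
have := h 1 0 0 w. rewrite scale1r addr0 mul1r => h0.
have : ip 0 w = 0 by move: h0; lra.
by move=> ->; rewrite addr0.
Qed.
Lemma ipNl x w : ip (- x) w = - ip x w.
Proof. by rewrite -scaleN1r ipZl mulN1r. Qed.
Lemma ipBl x y w : ip (x - y) w = ip x w - ip y w.
Proof. by rewrite ipDl ipNl. Qed.
Lemma ipDr x y w : ip w (x + y) = ip w x + ip w y.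
Proof. by rewrite ipC ipDl !(ipC w). Qed.
Lemma ipZr a x w : ip w (a *: x) = a * ip w x.
Proof. by rewrite ipC ipZl ipC. Qed.
Lemma ipNr x w : ip w (- x) = - ip w x.
Proof. by rewrite ipC ipNl ipC. Qed.
Lemma ipBr x y w : ip w (x - y) = ip w x - ip w y.
Proof. by rewrite ipDr ipNr. Qed.
Lemma nsq x : `|x| ^+ 2 = ip x x.
Proof. by case: hip. Qed.
Lemma nsqD x y : `|x + y| ^+ 2 = `|x| ^+ 2 + 2 * ip x y + `|y| ^+ 2.
Proof. rewrite !nsq ipDl !ipDr (ipC y x); ring. Qed.
Lemma nsqB x y : `|x - y| ^+ 2 = `|x| ^+ 2 - 2 * ip x y + `|y| ^+ 2.
Proof. by rewrite nsqD ipNr normrN; ring. Qed.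
Lemma ip_le x y : ip x y <= `|x| * `|y|.
Proof.
have h := ler_normD x y.
have h2 : `|x + y| ^+ 2 <= (`|x| + `|y|) ^+ 2.
  by rewrite ler_sqr ?nnegrE // addr_ge0.
rewrite nsqD in h2; nra.
Qed.
Lemma ip_ge x y : - (`|x| * `|y|) <= ip x y.
Proof. by rewrite lerNl -ipNr -(normrN y) ip_le. Qed.
End IP.


Section LS.
Variable R : realType.
Implicit Types s t : nat -> R.

Definition ssup s N := sup [set s k | k in [set k | (N <= k)%N]].
Definition Phi s := inf (range (ssup s)).

Definition bnd s := exists B, forall k, `|s k| <= B.

Lemma ssup_ub s B N : (forall k, `|s k| <= B) -> has_ubound [set s k | k in [set k | (N <= k)%N]].
Proof. by move=> hB; exists B => _ [k _ <-]; exact: le_trans (ler_norm _) (hB k). Qed.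

Lemma ssup_ge s B N k : (forall k, `|s k| <= B) -> (N <= k)%N -> s k <= ssup s N.
Proof. by move=> hB hk; apply: ub_le_sup; [exact: ssup_ub hB|exists k]. Qed.

Lemma Phi_lb s B : (forall k, `|s k| <= B) -> has_lbound (range (ssup s)).
Proof.
move=> hB; exists (- B) => _ [N _ <-].
apply: le_trans (@ssup_ge s B N N hB (leqnn N)).
by rewrite lerNl; apply: le_trans (hB N); rewrite -normrN ler_norm.
Qed.

Lemma PhiA s B : (forall k, `|s k| <= B) -> forall eps, 0 < eps ->
  exists N, forall k, (N <= k)%N -> s k <= Phi s + eps.
Proof.
move=> hB e e0.
have [y [N _ <-] hy] : exists2 y, range (ssup s) y & y < Phi s + e.
  by apply: inf_lt; [exists (ssup s 0); exists 0%N | rewrite ltrDl].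
by exists N => k hk; apply: le_trans (ltW hy); exact: ssup_ge hB hk.
Qed.

Lemma PhiB s B : (forall k, `|s k| <= B) -> forall eps, 0 < eps ->
  forall N, exists k, (N <= k)%N /\ Phi s - eps <= s k.
Proof.
move=> hB e e0 N.
have h1 : Phi s <= ssup s N by apply: ge_inf; [exact: Phi_lb hB | exists N].
have [y [k hk <-] hy] : exists2 y, [set s k | k in [set k | (N <= k)%N]] y & Phi s - e < y.
  apply: sup_gt; first by exists (s N); exists N => /=.
  by apply: lt_le_trans h1; rewrite ltrBlDr ltrDl.
by exists k; split => //; exact: ltW.
Qed.

Lemma Phi_le s t1 t2 a b c B0 B1 B2 :
  (forall k, `|s k| <= B0) -> (forall k, `|t1 k| <= B1) -> (forall k, `|t2 k| <= B2) ->
  0 <= a -> 0 <= b ->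
  (exists N, forall k, (N <= k)%N -> s k <= a * t1 k + b * t2 k + c) ->
  Phi s <= a * Phi t1 + b * Phi t2 + c.
Proof.
move=> h0 h1 h2 a0 b0 [N hN].
apply/ler_addgt0Pr => e e0.
have ep : 0 < e / (1 + a + b) by apply: divr_gt0 => //; lra.
have [N1 hN1] := PhiA h1 ep.
have [N2 hN2] := PhiA h2 ep.
have [k [hk hsk]] := PhiB h0 ep (maxn N (maxn N1 N2)).
move: hk; rewrite !geq_max => /and3P[k0 k1 k2].
move: hsk; have := hN k k0; have := hN1 k k1; have := hN2 k k2.
set E := e / (1 + a + b).
have -> : e = E * (1 + a + b) by rewrite /E mulfVK //; lra.
move=> i2 i1 i0 hsk.
have j1 : a * t1 k <= a * (Phi t1 + E) by rewrite ler_wpM2l.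
have j2 : b * t2 k <= b * (Phi t2 + E) by rewrite ler_wpM2l.
rewrite mulrDr in j1; rewrite mulrDr in j2. clearbody E. rewrite !mulrDr mulr1. lra.
Qed.

Lemma Phi_cvg s l B : (forall k, `|s k| <= B) -> s @ \oo --> l -> Phi s = l.
Proof.
move=> hB /cvgrPdist_lt hl.
apply/eqP; rewrite eq_le; apply/andP; split; apply/ler_addgt0Pr => e e0;
  have e2 : 0 < e / 2 by rewrite divr_gt0.
- have [N1 _ hN1] := hl _ e2.
  have [k [hk hsk]] := PhiB hB e2 N1.
  have := hN1 k hk; rewrite /= => h.
  have := ler_norm (s k - l); rewrite distrC; lra.
- have [N1 _ hN1] := hl _ e2.
  have [N2 hN2] := PhiA hB e2.
  have := hN1 (maxn N1 N2) (leq_maxl _ _); have := hN2 (maxn N1 N2) (leq_maxr _ _).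
  rewrite /= => h1 h2.
  have := ler_norm (l - s (maxn N1 N2)); lra.
Qed.
End LS.


Lemma ev_nat (P : nat -> Prop) : (\forall k \near \oo, P k) <-> exists N, forall k, (N <= k)%N -> P k.
Proof. split; [case => N _ h; exists N => k; exact: h | case=> N h; exists N => //]. Qed.
Lemma cvg_nat (R : realType) (V : normedModType R) (f : nat -> V) l :
  f @ \oo --> l <-> forall e, 0 < e -> exists N, forall k, (N <= k)%N -> `|l - f k| < e.
Proof. rewrite cvgrPdist_lt; split => h e /h; by rewrite ev_nat. Qed.

Lemma arch_inv (R : realType) (t : R) : 0 < t -> exists N, forall n, (N <= n)%N -> (n.+1%:R)^-1 < t.
Proof.
move=> t0; exists (Num.Def.trunc t^-1) => n hn.
rewrite -[t]invrK ltf_pV2 ?posrE ?invr_gt0 ?ltr0Sn //.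
apply: lt_le_trans (truncnS_gt _) _.
by rewrite ler_nat ltnS.
Qed.

Section AC.
Variables (R : realType) (H : completeNormedModType R) (ip : H -> H -> R) (T : H -> H).
Hypothesis hip : is_inner_product ip.
Hypothesis hT : nonexpansive T.
Implicit Types (u : nat -> H) (w x y : H) (M : R).

Definition Ph (u : nat -> H) x := Phi (fun k => `|u k - x| ^+ 2).

Lemma sqb u M x : (forall k, `|u k| <= M) -> forall k, `| `|u k - x| ^+ 2| <= (M + `|x|) ^+ 2.
Proof.
move=> hu k; rewrite ger0_norm ?exprn_ge0 //.
have h1 := ler_normB (u k) x; have := hu k; have := normr_ge0 (u k - x).
have := normr_ge0 x; nra.
Qed.

Lemma Ph_ge0 u M x : (forall k, `|u k| <= M) -> 0 <= Ph u x.
Proof.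
move=> hu.
have h0 : Phi (fun _ : nat => (0 : R)) = 0.
  by apply: (@Phi_cvg _ _ _ 0) => [k|]; [rewrite normr0|exact: cvg_cst].
have := @Phi_le _ (fun _ => 0) (fun k => `|u k - x| ^+ 2) (fun k => `|u k - x| ^+ 2) 1 0 0 0 _ _
  (fun k => ltac:(by rewrite normr0)) (sqb x hu) (sqb x hu) ler01 (lexx _).
rewrite h0 mul1r mul0r !addr0; apply.
by exists 0%N => k _; rewrite mul1r mul0r !addr0 exprn_ge0.
Qed.

Lemma mid_eq w x y : `|w - 2^-1 *: (x + y)| ^+ 2 =
  2^-1 * `|w - x| ^+ 2 + 2^-1 * `|w - y| ^+ 2 - `|x - y| ^+ 2 / 4.
Proof.
rewrite !(nsq hip) !(ipBl hip, ipDl hip, ipZl hip, ipBr hip, ipDr hip, ipZr hip).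
rewrite (ipC hip x w) (ipC hip y w) (ipC hip y x).
by field.
Qed.

Lemma Ph_mid u M x y : (forall k, `|u k| <= M) ->
  Ph u (2^-1 *: (x + y)) <= 2^-1 * Ph u x + 2^-1 * Ph u y - `|x - y| ^+ 2 / 4.
Proof.
move=> hu; apply: (Phi_le (sqb _ hu) (sqb _ hu) (sqb _ hu)); rewrite ?invr_ge0 ?ler0n //.
by exists 0%N => k _; rewrite mid_eq.
Qed.

Lemma Ph_lip u M x y : (forall k, `|u k| <= M) ->
  Ph u y <= Ph u x + (2 * (M + `|x|) * `|x - y| + `|x - y| ^+ 2).
Proof.
move=> hu.
have := @Phi_le _ (fun k => `|u k - y| ^+ 2) (fun k => `|u k - x| ^+ 2) (fun k => `|u k - x| ^+ 2)
  1 0 (2 * (M + `|x|) * `|x - y| + `|x - y| ^+ 2) _ _ _ (sqb y hu) (sqb x hu) (sqb x hu) ler01 (lexx _).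
rewrite mul1r mul0r addr0; apply.
exists 0%N => k _; rewrite mul1r mul0r addr0.
have e : u k - y = (u k - x) + (x - y) by rewrite addrA subrK.
have h1 : `|u k - y| <= `|u k - x| + `|x - y| by rewrite e ler_normD.
have h2 := ler_normB (u k) x; have := hu k.
have := normr_ge0 (u k - y); have := normr_ge0 (u k - x); have := normr_ge0 (x - y).
nra.
Qed.

Lemma Ph_T u M : (forall k, `|u k| <= M) -> (fun k => `|T (u k) - u k|) @ \oo --> 0 ->
  forall x, Ph u (T x) <= Ph u x.
Proof.
move=> hu /cvg_nat hs x; apply/ler_addgt0Pr => e e0.
set K := 2 * (M + `|x|) + 1.
have K0 : 0 < K by rewrite /K; have := normr_ge0 x; have := hu 0%N; have := normr_ge0 (u 0%N); lra.
have [N1 hN1] := hs 1 ltr01.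
have [N2 hN2] := hs (e / K) (divr_gt0 e0 K0).
have := @Phi_le _ (fun k => `|u k - T x| ^+ 2) (fun k => `|u k - x| ^+ 2) (fun k => `|u k - x| ^+ 2)
  1 0 e _ _ _ (sqb (T x) hu) (sqb x hu) (sqb x hu) ler01 (lexx _).
rewrite mul1r mul0r addr0; apply.
exists (maxn N1 N2) => k; rewrite geq_max => /andP[k1 k2]; rewrite mul1r mul0r addr0.
have := hN1 k k1; have := hN2 k k2; rewrite !sub0r !normrN => s2 s1.
set s := `|T (u k) - u k| in s1 s2.
have s0 : 0 <= s by exact: normr_ge0.
rewrite ger0_norm // in s1 s2.
have e1 : u k - T x = (u k - T (u k)) + (T (u k) - T x) by rewrite addrA subrK.
have h1 : `|u k - T x| <= s + `|u k - x|.
  by rewrite e1 (le_trans (ler_normD _ _)) // lerD // ?hT // distrC.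
have h2 := ler_normB (u k) x; have := hu k.
have : s * K <= e by rewrite -(ler_pdivlMr _ _ K0) ltW.
rewrite /K.
have := normr_ge0 (u k - T x); have := normr_ge0 (u k - x); have := normr_ge0 (T (u k) - u k).
rewrite -/s; nra.
Qed.

Lemma AC u M : (forall k, `|u k| <= M) -> (fun k => `|T (u k) - u k|) @ \oo --> 0 ->
  exists c, T c = c /\ forall x, Ph u c <= Ph u x.
Proof.
move=> hu hs.
set S := range (Ph u).
have Slb : has_lbound S by exists 0 => _ [x _ <-]; exact: Ph_ge0 hu.
have Sn : S !=set0 by exists (Ph u 0); exists 0.
set m := inf S.
have mle : forall x, m <= Ph u x by move=> x; apply: ge_inf => //; exists x.
have : forall n : nat, exists x, Ph u x < m + (n.+1%:R)^-1.
  move=> n; have [y [x _ <-] hx] := @inf_lt _ S (m + (n.+1%:R)^-1) Sn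
    ltac:(by rewrite ltrDl invr_gt0 ltr0Sn).
  by exists x.
case/choice => xs hxs.
have cau : forall n k, `|xs n - xs k| ^+ 2 <= 2 * (n.+1%:R)^-1 + 2 * (k.+1%:R)^-1.
  move=> n k; have := Ph_mid (xs n) (xs k) hu; have := mle (2^-1 *: (xs n + xs k)).
  have := hxs n; have := hxs k; move: (n.+1%:R^-1) (k.+1%:R^-1) => a b; lra.
have cv : cvgn xs.
  apply: cauchy_cvg; apply: cauchy_exP => e e0.
  have e4 : 0 < e ^+ 2 / 4 by rewrite divr_gt0 // exprn_gt0.
  have [N hN] := arch_inv e4.
  exists (xs N); exists N => // n /= hn; rewrite -ball_normE /=.
  have := cau N n; have := hN N (leqnn N); have := hN n hn.
  have := normr_ge0 (xs N - xs n); move: (N.+1%:R^-1) (n.+1%:R^-1) => a b d0 hb ha hd.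
  rewrite -(@ltr_pXn2r _ 2%N) // ?nnegrE ?(ltW e0) //; lra.
set c := limn xs.
have xc : xs @ \oo --> c := cv.
have Pc : Ph u c <= m.
  apply/ler_addgt0Pr => e e0.
  set K := 2 * (M + `|c| + 1) + 1.
  have K0 : 0 < K by rewrite /K; have := normr_ge0 c; have := hu 0%N; have := normr_ge0 (u 0%N); lra.
  move/cvg_nat: xc => xc.
  have [N1 hN1] := xc 1 ltr01.
  have eK : 0 < e / 2 / K by rewrite !divr_gt0.
  have [N2 hN2] := xc _ eK.
  have e2 : 0 < e / 2 by rewrite divr_gt0.
  have [N3 hN3] := arch_inv e2.
  set n := maxn N1 (maxn N2 N3).
  have n1 : (N1 <= n)%N by rewrite leq_maxl.
  have n2 : (N2 <= n)%N by rewrite /n (leq_trans (leq_maxl N2 N3)) // leq_maxr.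
  have n3 : (N3 <= n)%N by rewrite /n (leq_trans (leq_maxr N2 N3)) // leq_maxr.
  have := Ph_lip (xs n) c hu; have := hxs n.
  have := hN1 n n1; have := hN2 n n2; have := hN3 n n3.
  rewrite (distrC c).
  have hx : `|xs n| <= `|c| + `|xs n - c|.
    have e' : c + (xs n - c) = xs n by rewrite addrC subrK.
    by rewrite -{1}e' ler_normD.
  move: hx.
  set d := `|xs n - c|.
  have d0 : 0 <= d by exact: normr_ge0.
  move=> hx i3 i2 i1 i4 i5.
  have dK : d * K <= e / 2 by rewrite -(ler_pdivlMr _ _ K0) ltW.
  move: dK; rewrite /K => dK.
  have := hu 0%N; have := normr_ge0 (u 0%N); have := normr_ge0 c.
  have p1 : d * `|xs n| <= d * (`|c| + d) by rewrite ler_wpM2l.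
  have p2 : d * d <= d * 1 by rewrite ler_wpM2l // ltW.
  move: i3 i4 dK; move: (n.+1%:R^-1) => a; lra.
have fixc : T c = c.
  have h1 := Ph_T hu hs c.
  have h2 := Ph_mid c (T c) hu.
  have h3 := mle (2^-1 *: (c + T c)).
  have : `|c - T c| ^+ 2 <= 0 by lra.
  have := normr_ge0 (c - T c) => h0 h.
  have : `|c - T c| = 0 by nra.
  by move/normr0_eq0/eqP; rewrite subr_eq0 => /eqP/esym.
by exists c; split => // x; exact: le_trans Pc (mle x).
Qed.

End AC.


Lemma extract (P : nat -> Prop) : (forall N, exists k, (N <= k)%N /\ P k) ->
  exists n : nat -> nat, (forall j, (j <= n j)%N) /\ forall j, P (n j).
Proof. by case/choice => f hf; exists f; split => j; case: (hf j). Qed.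

Lemma cvg_sub (R : realType) (V : normedModType R) (f : nat -> V) (l : V) (n : nat -> nat) :
  (forall j, (j <= n j)%N) -> f @ \oo --> l -> (fun j => f (n j)) @ \oo --> l.
Proof.
move=> hn /cvg_nat hf; apply/cvg_nat => e /hf [N hN]; exists N => k hk.
exact: hN (leq_trans hk (hn k)).
Qed.

Section W.
Variables (R : realType) (H : completeNormedModType R) (ip : H -> H -> R) (T : H -> H).
Hypothesis hip : is_inner_product ip.
Hypothesis hT : nonexpansive T.
Implicit Types (u z : nat -> H) (w x y : H) (M : R).

Lemma Ph_fix z M (n : nat -> nat) p : (forall k, `|z k| <= M) -> (forall j, (j <= n j)%N) ->
  cvgn (fun k => `|z k - p|) -> Ph (fun j => z (n j)) p = Ph z p.
Proof.
move=> hz hn cz.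
have hz' : forall j, `|z (n j)| <= M by move=> j; exact: hz.
set L := limn (fun k => `|z k - p|).
have c2 : (fun k => `|z k - p| ^+ 2) @ \oo --> L * L by apply: cvgM.
rewrite /Ph (Phi_cvg (sqb p hz) c2).
exact: (Phi_cvg (sqb p hz') (cvg_sub hn c2)).
Qed.

Lemma W0 z M c y e : (forall k, `|z k| <= M) -> (fun k => `|T (z k) - z k|) @ \oo --> 0 ->
  (forall p, T p = p -> cvgn (fun k => `|z k - p|)) ->
  T c = c -> (forall x, Ph z c <= Ph z x) -> 0 < e ->
  ~ (forall N, exists k, (N <= k)%N /\ e <= ip (z k - c) y).
Proof.
move=> hz hs hF fcc hc e0 /extract [n [hn hk]].
set w := fun j => z (n j).
have hw : forall j, `|w j| <= M by move=> j; exact: hz.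
have hsw : (fun j => `|T (w j) - w j|) @ \oo --> 0 := cvg_sub hn hs.
have [c' [fc' hc']] := AC hip hT hw hsw.
have e1 : Ph w c <= Ph w c'.
  have := Ph_fix hz hn (hF _ fc'); have := Ph_fix hz hn (hF _ fcc).
  by rewrite /w => -> ->; exact: hc.
set Y := `|y| ^+ 2.
have Y0 : 0 <= Y by rewrite exprn_ge0.
set t := e / (Y + 1).
have t0 : 0 < t by rewrite divr_gt0 //; lra.
have Y1 : 0 < Y + 1 by lra.
have tY : t * (Y + 1) = e by rewrite /t mulfVK // lt0r_neq0.
have hN : exists N, forall k, (N <= k)%N -> `|w k - (c + t *: y)| ^+ 2 <=
    1 * `|w k - c| ^+ 2 + 0 * `|w k - c| ^+ 2 + (- (2 * t * e) + t ^+ 2 * Y).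
  exists 0%N => j _; rewrite mul1r mul0r addr0.
  have -> : w j - (c + t *: y) = (w j - c) - t *: y by rewrite opprD addrA.
  rewrite (nsqB hip) (ipZr hip) normrZ exprMn real_normK ?num_real // /Y.
  have := hk j; rewrite -/(w j) => hj.
  have := ler_wpM2l (ltW t0) hj; lra.
have := hc' (c + t *: y).
have := @Phi_le _ (fun k => `|w k - (c + t *: y)| ^+ 2) (fun k => `|w k - c| ^+ 2)
  (fun k => `|w k - c| ^+ 2) 1 0 (- (2 * t * e) + t ^+ 2 * Y) _ _ _
  (sqb _ hw) (sqb _ hw) (sqb _ hw) ler01 (lexx _) hN.
rewrite mul1r mul0r addr0.
rewrite -/(Ph w (c + t *: y)) -/(Ph w c) => h1 h2.
have : 2 * t * e <= t ^+ 2 * Y by lra.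
have : t * (t * Y) < t * e by rewrite ltr_pM2l //; lra.
nra.
Qed.

Lemma weak_main z M : (forall k, `|z k| <= M) -> (fun k => `|T (z k) - z k|) @ \oo --> 0 ->
  (forall p, T p = p -> cvgn (fun k => `|z k - p|)) ->
  exists c, fixed_point T c /\ weakly_converges ip z c.
Proof.
move=> hz hs hF.
have [c [fc hc]] := AC hip hT hz hs.
exists c; split => // y; apply/cvg_nat => e e0.
case: (pselect (exists N, forall k, (N <= k)%N -> `|ip c y - ip (z k) y| < e)) => // hno; exfalso.
have io : forall N, exists k, (N <= k)%N /\ e <= `|ip (z k - c) y|.
  move=> N; apply: contrapT => h; apply: hno; exists N => k hk; rewrite ltNge; apply/negP => he.
  by apply: h; exists k; split => //; rewrite (ipBl hip) distrC.
case: (pselect (forall N, exists k, (N <= k)%N /\ e <= ip (z k - c) y)) => hp.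
  exact: (W0 hz hs hF fc hc e0 hp).
have [N0 hN0] : exists N0, forall k, (N0 <= k)%N -> ip (z k - c) y < e.
  apply: contrapT => h; apply: hp => N; apply: contrapT => h2; apply: h.
  exists N => k hk; rewrite ltNge; apply/negP => he; apply: h2; exists k; split => //.
apply: (W0 hz hs hF fc hc e0 (y := - y)) => N.
have [k [hk hek]] := io (maxn N N0).
move: hk; rewrite geq_max => /andP[k1 k2].
exists k; split => //; rewrite (ipNr hip).
have := hN0 k k2; move: hek; rewrite ler_normr => /orP[h|h] //; lra.
Qed.

End W.


Section Seq.
Variable R : realType.
Implicit Types (x t : nat -> R).

Lemma psum_mono x n m : (forall k, 0 <= x k) -> (n <= m)%N ->
  \sum_(0 <= k < n) x k <= \sum_(0 <= k < m) x k.
Proof.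
move=> x0 nm; rewrite (@big_cat_nat _ _ _ n 0 m) //= lerDl.
by apply: sumr_ge0 => i _.
Qed.

Lemma psum_cvg x S : (forall k, 0 <= x k) -> (forall n, \sum_(0 <= k < n) x k <= S) ->
  (fun n => \sum_(0 <= k < n) x k) @ \oo --> sup (range (fun n => \sum_(0 <= k < n) x k)).
Proof.
move=> x0 hS; apply: nondecreasing_cvgn.
  by move=> n m nm; exact: psum_mono.
by exists S => _ [n _ <-].
Qed.

Lemma sum_cvg0 x S : (forall k, 0 <= x k) -> (forall n, \sum_(0 <= k < n) x k <= S) ->
  x @ \oo --> 0.
Proof.
move=> x0 hS; have /cvg_nat hP := psum_cvg x0 hS.
set L := sup _ in hP.
apply/cvg_nat => e e0.
have e2 : 0 < e / 2 by rewrite divr_gt0.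
have [N hN] := hP _ e2; exists N => k hk.
have := hN k hk; have := hN k.+1 (leqW hk).
rewrite big_nat_recr //= sub0r normrN (ger0_norm (x0 k)).
set P := \sum_(0 <= i < k) x i.
move=> h1 h2.
have := ler_norm (- (L - (P + x k))); have := ler_norm (L - P); rewrite normrN.
lra.
Qed.

Lemma qf x t S : (forall k, 0 <= x k) -> (forall k, 0 <= t k) ->
  (forall n, \sum_(0 <= k < n) t k <= S) -> (forall k, x k.+1 <= x k + t k) -> cvgn x.
Proof.
move=> x0 t0 hS hx.
set P := fun n => \sum_(0 <= k < n) t k.
set y := fun n => x n - P n.
have hy : y @ \oo --> inf (range y).
  apply: nonincreasing_cvgn.
    apply/nonincreasing_seqP => n; rewrite /y /P big_nat_recr //=.
    have := hx n; lra.
  exists (- S) => _ [n _ <-]; rewrite /y; have := x0 n; have := hS n; rewrite -/(P n); lra.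
have hP := psum_cvg t0 hS.
have -> : x = (fun n => y n + P n) by apply/funext => n; rewrite /y subrK.
by apply/cvg_ex; eexists; apply: cvgD; [exact: hy | exact: hP].
Qed.

Lemma squeeze0 (f g : nat -> R) : (forall k, 0 <= f k <= g k) -> g @ \oo --> 0 -> f @ \oo --> 0.
Proof.
move=> hf /cvg_nat hg; apply/cvg_nat => e /hg [N hN]; exists N => k /hN.
have /andP [f0 fg] := hf k.
rewrite !sub0r !normrN (ger0_norm f0) (ger0_norm (le_trans f0 fg)).
exact: le_lt_trans.
Qed.

Lemma esum_bnd x : (forall k, 0 <= x k) -> (\sum_(0 <= k <oo) (x k)%:E < +oo)%E ->
  exists S, forall n, \sum_(0 <= k < n) x k <= S.
Proof.
move=> x0 hlt; exists (fine (\sum_(0 <= k <oo) (x k)%:E)) => n.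
have h0 : (0 <= \sum_(0 <= k <oo) (x k)%:E)%E by apply: nneseries_ge0 => k _; rewrite lee_fin.
rewrite -lee_fin fineK; last by rewrite ge0_fin_numE.
rewrite -sumEFin.
by apply: nneseries_lim_ge => k _ _; rewrite lee_fin.
Qed.

Lemma esum_fin x S : (forall k, 0 <= x k) -> (forall n, \sum_(0 <= k < n) x k <= S) ->
  (\sum_(0 <= k <oo) (x k)%:E < +oo)%E.
Proof.
move=> x0 hS; apply: (@le_lt_trans _ _ S%:E); last exact: ltry.
apply: lime_le; first by apply: is_cvg_nneseries => k _ _; rewrite lee_fin.
by apply: nearW => n; rewrite sumEFin lee_fin.
Qed.

End Seq.

Lemma sqrt_cvg (R : realType) (f : nat -> R) L : (forall k, 0 <= f k) ->
  (fun k => f k ^+ 2) @ \oo --> L -> f @ \oo --> Num.sqrt L.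
Proof.
move=> f0 hf.
have := cvg_comp _ _ hf (@sqrt_continuous R L).
have -> : (Num.sqrt \o (fun k => f k ^+ 2)) = f.
  by apply/funext => k /=; rewrite sqrtr_sqr ger0_norm.
done.
Qed.

Lemma lin0 (R : realType) (f g h : nat -> R) (c d : R) :
  f @ \oo --> 0 -> g @ \oo --> 0 -> h @ \oo --> 0 ->
  (fun k => c * f k + d * g k + h k) @ \oo --> 0.
Proof.
move=> hf hg hh.
have -> : (0 : R) = c * 0 + d * 0 + 0 by rewrite !mulr0 !addr0.
apply: cvgD => //; apply: cvgD; exact: cvgMl_tmp.
Qed.


Section Steps.
Variables (R : realType) (H : normedModType R) (ip : H -> H -> R).
Hypothesis hip : is_inner_product ip.
Implicit Types (u v ee X Y m p : H) (l : R).

Lemma stepI u v ee l : 0 < l -> l <= 1 -> `|u + v| <= `|u| ->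
  `|u + l *: (v + ee)| ^+ 2 + (1 - l) / l * `|l *: (v + ee)| ^+ 2 <=
  `|u| ^+ 2 + (2 * `|u| + 2 * `|v| + `|ee|) * `|ee|.
Proof.
move=> l0 l1 huv.
have huv2 : `|u + v| ^+ 2 <= `|u| ^+ 2 by rewrite ler_sqr ?nnegrE.
rewrite (nsqD hip u) in huv2.
rewrite (nsqD hip u) (ipZr hip) (ipDr hip) normrZ exprMn real_normK ?num_real //.
rewrite (nsqD hip v).
have h1 := ip_le hip u ee; have h2 := ip_le hip v ee.
set W := `|v| ^+ 2 + 2 * ip v ee + `|ee| ^+ 2.
have -> : (1 - l) / l * (l ^+ 2 * W) = (1 - l) * l * W by field; lra.
rewrite /W.
have n1 := normr_ge0 u; have n2 := normr_ge0 v; have n3 := normr_ge0 ee.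
have q1 : l * (2 * ip u v + `|v| ^+ 2) <= 0 by rewrite pmulr_rle0 //; lra.
have q2 : l * (ip u ee) <= l * (`|u| * `|ee|) by rewrite ler_wpM2l //; lra.
have q3 : l * (ip v ee) <= l * (`|v| * `|ee|) by rewrite ler_wpM2l //; lra.
have q4 : l * ((2 * `|u| + 2 * `|v| + `|ee|) * `|ee|) <= (2 * `|u| + 2 * `|v| + `|ee|) * `|ee|.
  by rewrite ler_piMl // mulr_ge0 //; lra.
nra.
Qed.

Lemma stepII (al : R) X Y : `|(1 + al) *: X - al *: Y| ^+ 2 =
  (1 + al) * `|X| ^+ 2 - al * `|Y| ^+ 2 + al * (1 + al) * `|X - Y| ^+ 2.
Proof.
rewrite !(nsq hip) !(ipBl hip, ipZl hip, ipBr hip, ipZr hip).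
rewrite (ipC hip Y X); ring.
Qed.

Lemma muI m (z0 zz0 : H) p (al : R) : m = z0 + al *: (z0 - zz0) ->
  `|m - p| ^+ 2 = (1 + al) * `|z0 - p| ^+ 2 - al * `|zz0 - p| ^+ 2 + al * (1 + al) * `|z0 - zz0| ^+ 2.
Proof.
move=> ->; rewrite !(nsq hip) !(ipBl hip, ipDl hip, ipZl hip, ipNl hip, ipBr hip, ipDr hip, ipZr hip, ipNr hip).
rewrite ?(ipC hip zz0 z0) ?(ipC hip p z0) ?(ipC hip p zz0); ring.
Qed.

Lemma muIII m (z1 z0 zz0 : H) (al : R) : m = z0 + al *: (z0 - zz0) ->
  `|z1 - m| ^+ 2 = `|z1 - z0| ^+ 2 - 2 * al * ip (z1 - z0) (z0 - zz0) + al ^+ 2 * `|z0 - zz0| ^+ 2.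
Proof.
move=> ->; rewrite !(nsq hip) !(ipBl hip, ipDl hip, ipZl hip, ipNl hip, ipBr hip, ipDr hip, ipZr hip, ipNr hip).
rewrite ?(ipC hip zz0 z0) ?(ipC hip z0 z1) ?(ipC hip zz0 z1); ring.
Qed.

Lemma Snn (z1 z0 zz0 : H) (c : R) :
  0 <= `|z1 - z0| ^+ 2 - 2 * c * ip (z1 - z0) (z0 - zz0) + c ^+ 2 * `|z0 - zz0| ^+ 2.
Proof.
have := exprn_ge0 2 (normr_ge0 ((z1 - z0) - c *: (z0 - zz0))).
rewrite (nsqB hip) (ipZr hip) normrZ exprMn real_normK ?num_real //; lra.
Qed.

End Steps.

Lemma stepIII (R : realType) (A B P al a l d G : R) :
  0 <= A -> 0 <= B -> 0 <= al -> al <= a -> 0 < l -> l <= 1 -> 0 < d -> 0 <= G ->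
  0 <= A - 2 * (al + d * l) * P + (al + d * l) ^+ 2 * B ->
  (a + d * l) * G <= (1 - l) * d ->
  G * A - (1 - l) * al * d * B <= (1 - l) / l * (A - 2 * al * P + al ^+ 2 * B).
Proof.
move=> A0 B0 al0 ala l0 l1 d0 G0 S0 hG.
set c := al + d * l.
have c0 : 0 < c by rewrite /c; nra.
set W := (1 - l) / l * (A - 2 * al * P + al ^+ 2 * B) + (1 - l) * al * d * B.
have hW : W * (l * c) = (1 - l) * al * (A - 2 * c * P + c ^+ 2 * B) + (1 - l) * d * l * A.
  by rewrite /W /c; field; lra.
have h1 : 0 <= (1 - l) * al * (A - 2 * c * P + c ^+ 2 * B) by rewrite !mulr_ge0 //; lra.
have h2 : c * G <= (1 - l) * d.
  apply: le_trans hG; rewrite ler_wpM2r // /c; lra.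
have h3 : (l * c) * (G * A) <= W * (l * c).
  rewrite hW; have : l * A * (c * G) <= l * A * ((1 - l) * d) by rewrite ler_wpM2l // mulr_ge0 //; lra.
  lra.
have : G * A <= W by rewrite -(ler_pM2r (mulr_gt0 l0 c0)) mulrC.
rewrite /W; lra.
Qed.


Section Main.
Variables (R : realType) (H : completeNormedModType R) (ip : H -> H -> R) (T : H -> H)
  (z mu e : nat -> H) (zm1 : H) (alpha lambda : nat -> R) (a lam sigma delta M SE : R).
Hypotheses (hip : is_inner_product ip) (hT : nonexpansive T)
  (amono : forall k, alpha k <= alpha k.+1) (lmono : forall k, lambda k <= lambda k.+1)
  (hmu0 : mu 0%N = z 0%N + alpha 0%N *: (z 0%N - zm1))
  (hmuS : forall k, mu k.+1 = z k.+1 + alpha k.+1 *: (z k.+1 - z k))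
  (hz : forall k, z k.+1 = mu k + lambda k *: (T (mu k) + e k - mu k))
  (ha : 0 <= a < 1) (hal : forall k, 0 <= alpha k <= a) (hal0 : alpha 0%N = 0)
  (hlam : 0 < lam) (hsig : 0 < sigma) (hdel : 0 < delta)
  (hlb : forall k, lam <= lambda k /\
     lambda k <= (delta - a * (a * (1 + a) + a * delta + sigma))
                 / (delta * (1 + a * (1 + a) + a * delta + sigma)))
  (hM : forall k, `|z k| <= M) (hE : forall n, \sum_(0 <= k < n) `|e k| <= SE).

Ltac loc := have hsig' := hsig; have hdel' := hdel; have hlam' := hlam;
  have /andP [a0 a1] := ha.

Definition zz k := if k is k'.+1 then z k' else zm1.

Lemma mu_eq k : mu k = z k + alpha k *: (z k - zz k).
Proof. by case: k => [|k]; [exact: hmu0|exact: hmuS]. Qed.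

Lemma lam_facts k : [/\ 0 < lambda k, lambda k <= 1 &
  (a + delta * lambda k) * (a * (1 + a) + a * delta + sigma) <= (1 - lambda k) * delta].
Proof.
have [h1 h2] := hlb k.
loc.
have Q0 : 0 < a * (1 + a) + a * delta + sigma by nra.
have den : 0 < delta * (1 + a * (1 + a) + a * delta + sigma) by rewrite mulr_gt0 //; lra.
move: h2; rewrite (ler_pdivlMr _ _ den) => h2.
move: h2 Q0; set Q := a * (1 + a) + a * delta + sigma => h2 Q0.
have l0 : 0 < lambda k by lra.
have aQ : 0 <= a * Q by rewrite mulr_ge0 //; lra.
have e1 : delta * (1 + a * (1 + a) + a * delta + sigma) = delta * (1 + Q) by rewrite /Q; ring.
rewrite e1 in h2.
split => //; nra.
Qed.

Definition phi p k := `|z k - p| ^+ 2.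
Definition psi p k := `|zz k - p| ^+ 2.
Definition D k := `|z k - zz k| ^+ 2.
Definition eps p k := (2 * `|mu k - p| + 2 * `|T (mu k) - mu k| + `|e k|) * `|e k|.

Lemma stepA p k : T p = p ->
  phi p k.+1 + (1 - lambda k) / lambda k * `|z k.+1 - mu k| ^+ 2 <= `|mu k - p| ^+ 2 + eps p k.
Proof.
move=> hp; have [l0 l1 _] := lam_facts k.
have e1 : T (mu k) + e k - mu k = (T (mu k) - mu k) + e k by rewrite addrAC.
have e2 : z k.+1 - p = (mu k - p) + lambda k *: ((T (mu k) - mu k) + e k).
  by rewrite hz e1 addrAC.
have e3 : z k.+1 - mu k = lambda k *: ((T (mu k) - mu k) + e k).
  by rewrite hz e1 addrC addKr.
have huv : `|(mu k - p) + (T (mu k) - mu k)| <= `|mu k - p|.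
  have -> : (mu k - p) + (T (mu k) - mu k) = T (mu k) - T p by rewrite hp addrC addrA subrK.
  exact: hT.
rewrite /phi e2 e3 /eps.
exact: (stepI hip (e k) l0 l1 huv).
Qed.

Definition G k := a * (1 + a) + a * delta * (1 - lambda k) + sigma.

Lemma stepB p k : T p = p ->
  phi p k.+1 <= (1 + alpha k) * phi p k - alpha k * psi p k
    + (alpha k * (1 + alpha k) + (1 - lambda k) * alpha k * delta) * D k - G k * D k.+1 + eps p k.
Proof.
move=> hp; loc; have [l0 l1 l2] := lam_facts k; have /andP[al0 ala] := hal k.
have hA := stepA k hp.
rewrite (muI hip p (mu_eq k)) (muIII hip (z k.+1) (mu_eq k)) in hA.
have S0 := Snn hip (z k.+1) (z k) (zz k) (alpha k + delta * lambda k).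
have G0 : 0 <= G k.
  rewrite /G; have := mulr_ge0 a0 a0; have : 0 <= a * delta * (1 - lambda k).
    by rewrite !mulr_ge0 //; lra.
  nra.
have Gq : G k <= a * (1 + a) + a * delta + sigma.
  by rewrite /G; have := mulr_ge0 (mulr_ge0 a0 (ltW hdel')) (ltW l0); lra.
have c0 : 0 <= a + delta * lambda k by have := mulr_ge0 (ltW hdel') (ltW l0); lra.
have hG := le_trans (ler_wpM2l c0 Gq) l2.
have hIII := stepIII (exprn_ge0 2 (normr_ge0 (z k.+1 - z k))) (exprn_ge0 2 (normr_ge0 (z k - zz k)))
  al0 ala l0 l1 hdel' G0 S0 hG.
rewrite /phi /psi /D /=.
move: hA hIII; rewrite /phi; set X := (1 - lambda k) / lambda k * _; lra.
Qed.

Definition beta k := alpha k * (1 + alpha k) + alpha k * delta * (1 - lambda k).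
Definition Gam p k := phi p k - alpha k * psi p k + beta k * D k.

Lemma stepC p k : T p = p -> Gam p k.+1 <= Gam p k - sigma * D k.+1 + eps p k.
Proof.
move=> hp; loc; have hB := stepB k hp.
have [l0 l1 _] := lam_facts k; have [l0' l1' _] := lam_facts k.+1.
have /andP[al0 ala] := hal k; have /andP[al0' ala'] := hal k.+1.
have hl := lmono k; have ha' := amono k.
have f0 : 0 <= phi p k by rewrite /phi exprn_ge0.
have D0 : 0 <= D k.+1 by rewrite /D exprn_ge0.
have h1 : alpha k * phi p k <= alpha k.+1 * phi p k by rewrite ler_wpM2r.
have h2 : alpha k.+1 * (1 + alpha k.+1) <= a * (1 + a) by nra.
have h3 : alpha k.+1 * delta * (1 - lambda k.+1) <= a * delta * (1 - lambda k).
  apply: ler_pM; rewrite ?mulr_ge0 //; try lra.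
  by rewrite ler_wpM2r //; lra.
have h4 : beta k.+1 * D k.+1 <= (G k - sigma) * D k.+1.
  by rewrite ler_wpM2r // /beta /G; lra.
move: hB h1 h4; rewrite /Gam /psi /=.
rewrite -/(phi p k).
rewrite /beta; lra.
Qed.

Definition B := M + `|zm1|.

Lemma M0 : 0 <= M.
Proof. exact: le_trans (normr_ge0 _) (hM 0%N). Qed.

Lemma zb k : `|z k| <= B.
Proof. by rewrite /B; have := hM k; have := normr_ge0 zm1; lra. Qed.

Lemma zzb k : `|zz k| <= B.
Proof. case: k => [|k] /=; last exact: zb. by rewrite /B; have := M0; lra. Qed.

Lemma mub k : `|mu k| <= (1 + 2 * a) * B.
Proof.
loc; rewrite mu_eq; have /andP[al0 ala] := hal k.
have h1 := ler_normD (z k) (alpha k *: (z k - zz k)).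
rewrite normrZ ger0_norm // in h1.
have h2 := ler_normB (z k) (zz k).
have h3 := zb k; have h4 := zzb k.
have h5 : alpha k * `|z k - zz k| <= a * (B + B).
  apply: ler_pM => //; lra.
lra.
Qed.

Lemma eb k : `|e k| <= SE.
Proof.
apply: le_trans (hE k.+1); rewrite big_nat_recr //= lerDr.
by apply: sumr_ge0 => i _.
Qed.

Definition Ke (p : H) := 6 * ((1 + 2 * a) * B + `|p|) + SE.

Lemma eps0 (p : H) k : 0 <= eps p k.
Proof. by rewrite /eps mulr_ge0 // !addr_ge0 // mulr_ge0. Qed.

Lemma epsb p k : T p = p -> eps p k <= Ke p * `|e k|.
Proof.
move=> hp; rewrite /eps /Ke ler_wpM2r //.
have h1 : `|mu k - p| <= (1 + 2 * a) * B + `|p|.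
  by apply: le_trans (ler_normB _ _) _; rewrite lerD2r mub.
have h2 : `|T (mu k) - mu k| <= 2 * `|mu k - p|.
  have -> : T (mu k) - mu k = (T (mu k) - T p) + (p - mu k) by rewrite hp addrA subrK.
  apply: le_trans (ler_normD _ _) _; rewrite (distrC p); have := hT (mu k) p; lra.
have := eb k; lra.
Qed.

Lemma Ke0 (p : H) : 0 <= Ke p.
Proof.
loc; rewrite /Ke; have := le_trans (normr_ge0 _) (eb 0%N); have := normr_ge0 p.
have : 0 <= B by rewrite /B; have := M0; have := normr_ge0 zm1; lra.
nra.
Qed.

Lemma sum_eps p n : T p = p -> \sum_(0 <= k < n) eps p k <= Ke p * SE.
Proof.
move=> hp; apply: le_trans (_ : \sum_(0 <= k < n) Ke p * `|e k| <= _).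
  by apply: ler_sum => k _; exact: epsb.
by rewrite -mulr_sumr ler_wpM2l // Ke0.
Qed.

Lemma sumD p n : T p = p ->
  sigma * \sum_(0 <= k < n) D k.+1 <= Gam p 0 - Gam p n + \sum_(0 <= k < n) eps p k.
Proof.
move=> hp; elim: n => [|n IH]; first by rewrite !big_geq // mulr0 subrr addr0.
rewrite !big_nat_recr //= mulrDr.
have := stepC n hp; lra.
Qed.

Lemma Gam_lb (p : H) n : - (a * (B + `|p|) ^+ 2) <= Gam p n.
Proof.
loc; rewrite /Gam.
have [_ l1 _] := lam_facts n; have /andP[al0 ala] := hal n.
have f0 : 0 <= phi p n by rewrite /phi exprn_ge0.
have D0 : 0 <= D n by rewrite /D exprn_ge0.
have b0 : 0 <= beta n.
  by rewrite /beta addr_ge0 // !mulr_ge0 //; lra.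
have hps : psi p n <= (B + `|p|) ^+ 2.
  rewrite /psi; have := ler_normB (zz n) p; have := zzb n; have := normr_ge0 (zz n - p).
  have := normr_ge0 p; nra.
have : alpha n * psi p n <= a * (B + `|p|) ^+ 2.
  apply: ler_pM => //; by rewrite /psi exprn_ge0.
have := mulr_ge0 b0 D0; lra.
Qed.

Definition SD (p : H) := (Gam p 0 + a * (B + `|p|) ^+ 2 + Ke p * SE) / sigma.

Lemma sumDb p n : T p = p -> \sum_(0 <= k < n) D k.+1 <= SD p.
Proof.
move=> hp; loc; rewrite /SD ler_pdivlMr // mulrC.
have := sumD n hp; have := Gam_lb p n; have := sum_eps n hp; lra.
Qed.

Definition zeta p k := alpha k * (1 + alpha k) * D k + eps p k.
Definition theta p k := Num.max (phi p k - psi p k) 0.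

Lemma stepB' p k : T p = p -> phi p k.+1 <= phi p k + alpha k * (phi p k - psi p k) + zeta p k.
Proof.
move=> hp; have hA := stepA k hp; have [l0 l1 _] := lam_facts k.
rewrite (muI hip p (mu_eq k)) in hA.
have : 0 <= (1 - lambda k) / lambda k * `|z k.+1 - mu k| ^+ 2.
  by rewrite mulr_ge0 // ?exprn_ge0 // divr_ge0 //; lra.
move: hA; rewrite /zeta /phi /psi /D; lra.
Qed.

Lemma theta0 p k : 0 <= theta p k.
Proof. by rewrite /theta le_max lexx orbT. Qed.

Lemma zeta0 p k : 0 <= zeta p k.
Proof.
loc; have /andP[al0 ala] := hal k.
rewrite /zeta addr_ge0 ?eps0 // !mulr_ge0 // ?/D ?exprn_ge0 //; lra.
Qed.

Lemma th_step p k : T p = p -> theta p k.+1 <= a * theta p k + zeta p k.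
Proof.
move=> hp; loc; have /andP[al0 ala] := hal k.
have h := stepB' k hp.
have t1 : phi p k - psi p k <= theta p k by rewrite /theta le_max lexx.
have t0 := theta0 p k; have z0 := zeta0 p k.
have h2 : alpha k * (phi p k - psi p k) <= a * theta p k.
  apply: le_trans (_ : alpha k * theta p k <= _); first by rewrite ler_wpM2l.
  by rewrite ler_wpM2r.
rewrite {1}/theta ge_max; apply/andP; split; last by rewrite addr_ge0 // mulr_ge0.
by rewrite /psi /=; rewrite -/(phi p k); lra.
Qed.

Lemma sumDall p n : T p = p -> \sum_(0 <= k < n) D k <= D 0%N + SD p.
Proof.
move=> hp; apply: le_trans (_ : \sum_(0 <= k < n.+1) D k <= _).
  by apply: psum_mono => // k; rewrite /D exprn_ge0.
by rewrite big_nat_recl //= lerD2l sumDb.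
Qed.

Definition Z p := a * (1 + a) * (D 0%N + SD p) + Ke p * SE.

Lemma sum_zeta p n : T p = p -> \sum_(0 <= k < n) zeta p k <= Z p.
Proof.
move=> hp; loc; rewrite /zeta /Z big_split /=; apply: lerD; last exact: sum_eps.
apply: le_trans (_ : \sum_(0 <= k < n) a * (1 + a) * D k <= _).
  apply: ler_sum => k _; have /andP[al0 ala] := hal k; apply: ler_wpM2r; first by rewrite /D exprn_ge0.
  by apply: ler_pM; lra.
rewrite -mulr_sumr ler_wpM2l ?sumDall //; nra.
Qed.

Lemma sum_theta p n : T p = p ->
  \sum_(0 <= k < n) theta p k.+1 <= (a * theta p 0%N + Z p) / (1 - a).
Proof.
move=> hp; loc; rewrite ler_pdivlMr; last by lra.
have h1 : \sum_(0 <= k < n) theta p k.+1 <= a * \sum_(0 <= k < n) theta p k + \sum_(0 <= k < n) zeta p k.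
  by rewrite mulr_sumr -big_split /=; apply: ler_sum => k _; exact: th_step.
have h2 : \sum_(0 <= k < n) theta p k <= theta p 0%N + \sum_(0 <= k < n) theta p k.+1.
  apply: le_trans (_ : \sum_(0 <= k < n.+1) theta p k <= _); first by apply: psum_mono => // k; exact: theta0.
  by rewrite big_nat_recl.
have h3 : a * \sum_(0 <= k < n) theta p k <= a * (theta p 0%N + \sum_(0 <= k < n) theta p k.+1).
  by rewrite ler_wpM2l.
have := sum_zeta n hp; lra.
Qed.

Lemma phi_cvg p : T p = p -> cvgn (phi p).
Proof.
move=> hp; apply: (@qf _ _ (fun k => theta p k.+1) ((a * theta p 0%N + Z p) / (1 - a))).
- by move=> k; rewrite /phi exprn_ge0.
- by move=> k; exact: theta0.
- by move=> n; exact: sum_theta.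
- move=> k; have : phi p k.+1 - psi p k.+1 <= theta p k.+1 by rewrite /theta le_max lexx.
  by rewrite /psi /= -/(phi p k); lra.
Qed.

Lemma sumr2 p0 n : T p0 = p0 -> \sum_(0 <= k < n) `|z k.+1 - z k| ^+ 2 <= SD p0.
Proof. move=> hp; exact: (sumDb n hp). Qed.

Lemma r0 p0 : T p0 = p0 -> (fun k => `|z k.+1 - z k|) @ \oo --> 0.
Proof.
move=> hp.
have h := @sum_cvg0 _ (fun k => `|z k.+1 - z k| ^+ 2) _ (fun k => exprn_ge0 2 (normr_ge0 _))
  (fun n => sumr2 n hp).
by have := sqrt_cvg (fun k => normr_ge0 (z k.+1 - z k)) h; rewrite sqrtr0.
Qed.

Lemma g0 p0 : T p0 = p0 -> (fun k => `|z k - zz k|) @ \oo --> 0.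
Proof. by move=> hp; rewrite -cvg_shiftS /=; exact: r0 hp. Qed.

Lemma e0 : (fun k => `|e k|) @ \oo --> 0.
Proof. exact: (@sum_cvg0 _ (fun k => `|e k|) SE (fun k => normr_ge0 _) hE). Qed.

Lemma vb k : `|T (mu k) - mu k| <=
  lam^-1 * `|z k.+1 - z k| + a / lam * `|z k - zz k| + `|e k|.
Proof.
loc; have [l0 l1 _] := lam_facts k; have [hl _] := hlb k.
have /andP[al0 ala] := hal k.
have e1 : T (mu k) + e k - mu k = (T (mu k) - mu k) + e k by rewrite addrAC.
have e3 : z k.+1 - mu k = lambda k *: ((T (mu k) - mu k) + e k).
  by rewrite hz e1 addrC addKr.
have n3 : `|z k.+1 - mu k| = lambda k * `|(T (mu k) - mu k) + e k|.
  by rewrite e3 normrZ gtr0_norm.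
have e4 : z k.+1 - mu k = (z k.+1 - z k) - alpha k *: (z k - zz k).
  by rewrite (mu_eq k) opprD addrA.
have n4 : `|z k.+1 - mu k| <= `|z k.+1 - z k| + a * `|z k - zz k|.
  rewrite e4; apply: le_trans (ler_normB _ _) _; rewrite lerD2l normrZ ger0_norm //.
  by rewrite ler_wpM2r.
have n5 : `|T (mu k) - mu k| <= `|(T (mu k) - mu k) + e k| + `|e k|.
  by have := ler_normB ((T (mu k) - mu k) + e k) (e k); rewrite addrK.
set w := `|(T (mu k) - mu k) + e k| in n3 n5.
have w0 : 0 <= w by exact: normr_ge0.
have n6 : lam * w <= `|z k.+1 - z k| + a * `|z k - zz k|.
  by rewrite n3 in n4; apply: le_trans n4; rewrite ler_wpM2r.
have n7 : w <= (`|z k.+1 - z k| + a * `|z k - zz k|) / lam by rewrite ler_pdivlMr // mulrC.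
have eq : (`|z k.+1 - z k| + a * `|z k - zz k|) / lam =
  lam^-1 * `|z k.+1 - z k| + a / lam * `|z k - zz k| by field; rewrite lt0r_neq0.
lra.
Qed.

Lemma v0 p0 : T p0 = p0 -> (fun k => `|T (mu k) - mu k|) @ \oo --> 0.
Proof.
move=> hp; apply: (squeeze0 (g := fun k => lam^-1 * `|z k.+1 - z k| + a / lam * `|z k - zz k| + `|e k|)).
  by move=> k; rewrite normr_ge0 vb.
exact: lin0 (r0 hp) (g0 hp) e0.
Qed.

Lemma Tz0 p0 : T p0 = p0 -> (fun k => `|T (z k) - z k|) @ \oo --> 0.
Proof.
move=> hp; apply: (squeeze0 (g := fun k => 2 * a * `|z k - zz k| + 1 * `|T (mu k) - mu k| + (fun _ => 0) k)).
  move=> k; rewrite normr_ge0 /= addr0 mul1r.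
  have e1 : T (z k) - z k = (T (z k) - T (mu k)) + (T (mu k) - mu k) + (mu k - z k).
    by rewrite !addrA !subrK.
  have e2 : mu k - z k = alpha k *: (z k - zz k) by rewrite {1}(mu_eq k) addrC addKr.
  loc; have /andP[al0 ala] := hal k.
  rewrite e1; apply: le_trans (ler_normD _ _) _; apply: le_trans (lerD (ler_normD _ _) (lexx _)) _.
  have h1 : `|T (z k) - T (mu k)| <= alpha k * `|z k - zz k|.
    by rewrite distrC; apply: le_trans (hT _ _) _; rewrite e2 normrZ ger0_norm.
  rewrite e2 normrZ ger0_norm //.
  have : alpha k * `|z k - zz k| <= a * `|z k - zz k| by rewrite ler_wpM2r.
  lra.
exact: lin0 (g0 hp) (v0 hp) (cvg_cst 0).
Qed.

Lemma main_all p0 : T p0 = p0 ->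
  [/\ (\sum_(0 <= k <oo) (`|z k.+1 - z k| ^+ 2)%:E < +oo)%E,
      (fun k => `|z k.+1 - z k|) @ \oo --> 0,
      (forall zs, fixed_point T zs -> cvgn (fun k => `|z k - zs|)),
      (fun k => `|T (mu k) - mu k|) @ \oo --> 0
    & exists zs, fixed_point T zs /\ weakly_converges ip z zs].
Proof.
move=> hp.
have hF : forall zs, fixed_point T zs -> cvgn (fun k => `|z k - zs|).
  move=> zs hzs; apply/cvg_ex; eexists.
  exact: (sqrt_cvg (fun k => normr_ge0 (z k - zs)) (phi_cvg hzs)).
split => //.
- exact: (esum_fin (fun k => exprn_ge0 2 (normr_ge0 _)) (fun n => sumr2 n hp)).
- exact: r0 hp.
- exact: v0 hp.
- exact: (weak_main hip hT hM (Tz0 hp) hF).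
Qed.

End Main.


Theorem theorem2 (R : realType) (H : completeNormedModType R)
  (ip : H -> H -> R) (T : H -> H)
  (z mu e : nat -> H) (zm1 : H) (alpha lambda : nat -> R)
  (a lam sigma delta : R) :
  is_inner_product ip ->
  nonexpansive T ->
  (exists x, fixed_point T x) ->
  (forall k, alpha k <= alpha k.+1) ->
  (forall k, lambda k <= lambda k.+1) ->
  (* iteration, with z^{-1} = zm1 *)
  mu 0%N = z 0%N + alpha 0%N *: (z 0%N - zm1) ->
  (forall k, mu k.+1 = z k.+1 + alpha k.+1 *: (z k.+1 - z k)) ->
  (forall k, z k.+1 = mu k + lambda k *: (T (mu k) + e k - mu k)) ->
  (* (a) *)
  0 <= a < 1 ->
  (forall k, 0 <= alpha k <= a) ->
  alpha 0%N = 0 ->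
  (* (b) *)
  0 < lam -> 0 < sigma -> 0 < delta ->
  delta > a * (a * (1 + a) + sigma) / (1 - a ^+ 2) ->
  (forall k, lam <= lambda k /\
     lambda k <= (delta - a * (a * (1 + a) + a * delta + sigma))
                 / (delta * (1 + a * (1 + a) + a * delta + sigma))) ->
  (* (c) *)
  (exists M : R, forall k, `|z k| <= M) ->
  (* (d) *)
  (\sum_(0 <= k <oo) (`|e k|)%:E < +oo)%E ->
  [/\ (\sum_(0 <= k <oo) (`|z k.+1 - z k| ^+ 2)%:E < +oo)%E,
      (fun k => `|z k.+1 - z k|) @ \oo --> 0,
      (forall zs, fixed_point T zs -> cvgn (fun k => `|z k - zs|)),
      (fun k => `|T (mu k) - mu k|) @ \oo --> 0
    & exists zs, fixed_point T zs /\ weakly_converges ip z zs].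
Proof.
move=> hip hT [p0 hp0] amono lmono hmu0 hmuS hz ha hal hal0 hlam hsig hdel hdb hlb [M hM] hsum.
have [SE hE] := esum_bnd (fun k => normr_ge0 (e k)) hsum.

exact: (main_all hip hT amono lmono hmu0 hmuS hz ha hal hlam hsig hdel hlb hM hE hp0).
Qed.
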